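(* Let $m,n\geq1$. The quiver $\mathrm Q_m^n$ is the double quiver of the graph $\Gamma_m^n$: it has the same vertices, and for each edge of $\Gamma_m^n$ between $e_\lambda$ and $e_\mu$ it has exactly one arrow from $e_\lambda$ to $e_\mu$ and exactly one arrow from $e_\mu$ to $e_\lambda$, and it has no other arrows.
   Context: Fix a field $\Bbbk$. A weight of type $(m,n)$ is a word in $\vee$ (''down'') and $\wedge$ (''up'') with $m$ letters $\vee$ and $n$ letters $\wedge$; $\Lambda_m^n$ is the set of weights. Place the $m+n$ points on a horizontal line. A cup diagram is a collection of pairwise non-intersecting curves below the line, each a cup (lower semicircle joining two points) or a half-line (ray going down), each point on exactly one curve; a cap diagram is the mirror image. $\underline{\lambda}$: repeatedly join neighbouring $\vee\wedge$ pairs ($\vee$ left) by cups, ignoring joined points, half-lines elsewhere; $\overline\lambda$ its mirror image. An arc diagram $\underline\alpha\lambda\overline\beta$ ($\alpha,\beta,\lambda\in\Lambda_m^n$; cup diagram of $\alpha$ below, cap diagram of $\beta$ above, labels $\lambda$) requires every cup/cap to join a $\vee$ and a $\wedge$ (labels orient components: $\vee$ down, $\wedge$ up) and no two half-lines on the same side at positions $i<j$ labelled $\vee,\wedge$. A cup/cap is clockwise if its left endpoint is $\wedge$; the degree is the number of clockwise cups and caps. The degree-0 arc diagrams are exactly $e_\lambda:=\underline\lambda\lambda\overline\lambda$; gluing each cup of $\underline\lambda$ to its mirror cap of $\overline\lambda$ gives the (counterclockwise) circles of $e_\lambda$. $\mathrm Q_m^n$ is the quiver with vertices $\{e_\lambda\}_{\lambda\in\Lambda_m^n}$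 and one arrow from $e_\alpha$ to $e_\beta$ for each arc diagram $\underline\alpha\lambda\overline\beta$ of degree $1$. $\Gamma_m^n$ is the simple undirected graph with vertices $\{e_\lambda\}_{\lambda\in\Lambda_m^n}$ and an edge between $e_\lambda$ and $e_\mu$ if one of $\lambda,\mu$ is obtained from the other by exchanging the labels $\vee$ and $\wedge$ at the two endpoints of a $\vee\cdots\wedge$ pair lying on the same circle of its degree-zero diagram (i.e. the two endpoints of one cup of $\underline\lambda$, resp. $\underline\mu$). *)

(* Defs.v *)
(* Weights are bool sequences: true = "down" (vee), false = "up" (wedge).
   Positions are numbered 0, 1, ..., m+n-1 from left to right. *)
From mathcomp Require Import all_boot.
Set Implicit Arguments. Unset Strict Implicit. Unset Printing Implicit Defensive.

Definition Lambda (m n : nat) : {set (m + n).-tuple bool} :=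
  [set t : (m + n).-tuple bool | count id t == m].

(* Cups of the cup diagram underline(lambda): repeatedly join neighbouring vee-wedge pairs
   (vee on the left), ignoring already joined points.  Implemented by the usual stack
   (bracket-matching) procedure; st is the stack of not yet joined vee positions. *)
Fixpoint cups_aux (s : seq bool) (i : nat) (st : seq nat) : seq (nat * nat) :=
  match s with
  | [::] => [::]
  | b :: s' =>
      if b then cups_aux s' i.+1 (i :: st)
      else match st with
           | [::] => cups_aux s' i.+1 [::]
           | j :: st' => (j, i) :: cups_aux s' i.+1 st'
           end
  end.

Definition cups (s : seq bool) : seq (nat * nat) := cups_aux s 0 [::].

Definition on_cup (s : seq bool) (k : nat) : bool :=
  has (fun p => (p.1 == k) || (p.2 == k)) (cups s).

Definition rays (s : seq bool) : seq nat :=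
  [seq k <- iota 0 (size s) | ~~ on_cup s k].

Definition lab (lam : seq bool) (k : nat) : bool := nth false lam k.

(* Conditions on one side (cups of underline(a), or caps of overline(a)) with labels lam:
   every cup joins a vee and a wedge, and no two half-lines at positions i < j
   are labelled vee, wedge respectively. *)
Definition side_ok (a lam : seq bool) : bool :=
  all (fun p => lab lam p.1 != lab lam p.2) (cups a) &&
  all (fun i => all (fun j => ~~ [&& i < j, lab lam i & ~~ lab lam j]) (rays a)) (rays a).

Definition arc_diagram (alpha lam beta : seq bool) : bool :=
  side_ok alpha lam && side_ok beta lam.

(* number of clockwise cups (left endpoint labelled wedge) on one side *)
Definition nclockwise (a lam : seq bool) : nat :=
  count (fun p => ~~ lab lam p.1) (cups a).

Definition degree (alpha lam beta : seq bool) : nat :=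
  nclockwise alpha lam + nclockwise beta lam.

(* number of arrows e_alpha -> e_beta in the quiver Q_m^n: the number of arc diagrams
   underline(alpha) lambda overline(beta) of degree 1, lambda in Lambda_m^n *)
Definition n_arrows (m n : nat) (alpha beta : (m + n).-tuple bool) : nat :=
  #|[set lam in Lambda m n | arc_diagram alpha lam beta && (degree alpha lam beta == 1)]|.

Definition swap_at (lam : seq bool) (i j : nat) : seq bool :=
  [seq (if k == i then lab lam j else if k == j then lab lam i else lab lam k)
  | k <- iota 0 (size lam)].

Definition cup_swap (lam mu : seq bool) : bool :=
  has (fun p => mu == swap_at lam p.1 p.2) (cups lam).

Definition gamma_edge (lam mu : seq bool) : bool :=
  cup_swap lam mu || cup_swap mu lam.

(* Main.v *)
Require Import Defs.
From mathcomp Require Import all_boot zify.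

Definition E (C : seq (nat * nat)) := flatten [seq [:: p.1; p.2] | p <- C].

Lemma cups_inv w : forall s i st, s = drop i w -> uniq st -> all (fun k => k < i) st ->
  all (lab w) st ->
  [/\ uniq (E (cups_aux s i st)),
      forall k, k \in E (cups_aux s i st) -> (k \in st) || (i <= k < size w) &
      all (fun p => [&& p.1 < p.2, p.2 < size w, lab w p.1 & ~~ lab w p.2]) (cups_aux s i st)].
Proof.
elim=> [|b s IH] i st Hs Hu Hlt Hlab /=; first by split.
have Hi : i < size w.
  by rewrite ltnNge; apply/negP => H; move: Hs; rewrite drop_oversize.
move: Hs; rewrite (drop_nth false Hi) => -[Hb Hs].
have Hnin : i \notin st by apply/negP => /(allP Hlt); rewrite ltnn.
case: b Hb => Hb.
- have [] := IH i.+1 (i :: st) Hs; rewrite /= ?Hnin ?Hu ?ltnSn //.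
  + by apply/allP => k /(allP Hlt) /ltnW.
  + by rewrite /lab -Hb.
  move=> U S A; split=> // k /S; rewrite in_cons.
  case: eqP => [->|_] /=; first by rewrite leqnn Hi orbT.
  by case: (k \in st) => //= /andP [H1 H2]; rewrite H2 ltnW.
- case: st Hu Hlt Hlab Hnin => [|x st] Hu Hlt Hlab Hnin.
  + have [] := IH i.+1 [::] Hs => //.
    move=> U S A; split=> // k /S /= /andP [H1 H2]; by rewrite H2 ltnW.
  + move: Hu Hlt Hlab Hnin => /= /andP [Hx Hu] /andP [Hxi Hlt] /andP [Hlx Hlab].
    rewrite in_cons negb_or => /andP [Hix Hni].
    have [U S A] := IH i.+1 st Hs Hu
       (sub_all (fun k (H : k < i) => ltnW H) Hlt) Hlab.
    split.
    * rewrite /E /= -/(E _) in_cons negb_or U andbT.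
      rewrite -andbA; apply/and3P; split.
      - by apply/negP => /eqP H; move: Hxi; rewrite H ltnn.
      - apply/negP => /S /orP [H|]; [by move: Hx; rewrite H| lia].
      - apply/negP => /S /orP [H|]; [by move: Hni; rewrite H| lia].
    * rewrite /E /= -/(E _) => k; rewrite !in_cons.
      case/orP => [/eqP ->|]; first by rewrite eqxx.
      case/orP => [/eqP ->|]; first by rewrite leqnn Hi !orbT.
      move=> /S /orP [->|]; first by rewrite orbT.
      move=> /andP [H1 H2]; rewrite H2 ltnW //; lia.
    * rewrite /= A andbT Hxi Hi Hlx /=.
      by rewrite /lab -Hb.
Qed.


Lemma cups_rays w : forall s i st, s = drop i w ->
  forall j k, i <= j < size w -> ~~ lab w j -> j \notin E (cups_aux s i st) ->
  (k \in st) || [&& i <= k, k < j & lab w k] -> k \in E (cups_aux s i st).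
Proof.
elim=> [|b s IH] i st Hs j k Hj Hlj Hjn Hk.
  by have := congr1 size Hs; rewrite size_drop /=; lia.
have Hi : i < size w.
  by rewrite ltnNge; apply/negP => H; move: Hs; rewrite drop_oversize.
move: Hs; rewrite (drop_nth false Hi) => -[Hb Hs].
case: b Hb Hjn => Hb Hjn /=.
- have Hji : j != i by apply/eqP => Hji; move: Hlj; rewrite Hji /lab -Hb.
  apply: (IH i.+1 (i :: st) Hs j k) => //.
    by move: Hj Hji; case/andP => H1 H2 H3; rewrite H2 andbT ltn_neqAle eq_sym H3.
  rewrite in_cons; move: Hk => /orP [->|/and3P [H1 H2 H3]]; first by rewrite orbT.
  case: (eqVneq k i) => [->|Hki] //.
  by rewrite ltn_neqAle eq_sym Hki H1 H2 H3 !orbT.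
case: st Hk Hjn => [|x st] Hk Hjn /=.
- move: Hk => /= /and3P [H1 H2 H3].
  have Hki : k != i by apply/eqP => Hki; move: H3; rewrite Hki /lab -Hb.
  have Hji : j != i by apply/eqP => Hji; move: H1 H2; rewrite Hji; lia.
  apply: (IH i.+1 _ Hs j k) => //.
    by move: Hj Hji; case/andP => H4 H5 H6; rewrite H5 andbT ltn_neqAle eq_sym H6.
  by rewrite in_nil /= H2 H3 andbT ltn_neqAle eq_sym Hki H1.
- move: Hjn; rewrite /E /= -/(E _) !in_cons negb_or => /andP [_ /norP [Hji Hjn]].
  move: Hk; rewrite in_cons -orbA => /orP [->//|Hk].
  rewrite !orbA; apply/orP; right.
  apply: (IH i.+1 _ Hs j k) => //.
    by move: Hj Hji; case/andP => H4 H5 H6; rewrite H5 andbT ltn_neqAle eq_sym H6.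
  move: Hk => /orP [->//|/and3P [H1 H2 H3]].
  have Hki : k != i by apply/eqP => Hki; move: H3; rewrite Hki /lab -Hb.
  by rewrite H2 H3 andbT ltn_neqAle eq_sym Hki H1 orbT.
Qed.

Lemma memE (C : seq (nat * nat)) k :
  (k \in E C) = has (fun p => (p.1 == k) || (p.2 == k)) C.
Proof.
elim: C => //= p C IH; rewrite /E /= -/(E _) !in_cons IH orbA.
by rewrite (eq_sym k p.1) (eq_sym k p.2).
Qed.

Lemma onE w k : on_cup w k = (k \in E (cups w)).
Proof. by rewrite memE. Qed.

Lemma cups_inv0 w :
  [/\ uniq (E (cups w)), forall k, k \in E (cups w) -> k < size w &
      forall p, p \in cups w -> [&& p.1 < p.2, p.2 < size w, lab w p.1 & ~~ lab w p.2]].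
Proof.
have [] := @cups_inv w w 0 [::] (esym (drop0 w)) isT isT isT.
move=> U S A; split.
- exact: U.
- by move=> k Hk; have := S k Hk; rewrite in_nil.
- by move=> p Hp; apply: (allP A).
Qed.

Lemma cupsR w i j : i < j -> j < size w -> lab w i -> ~~ lab w j ->
  on_cup w i || on_cup w j.
Proof.
move=> Hij Hj Hi Hnj; rewrite !onE; case Hjn: (j \in E (cups w)); first by rewrite orbT.
rewrite (@cups_rays w w 0 [::] (esym (drop0 w)) j i) ?Hjn ?Hj ?Hij ?Hi //.
Qed.

Lemma uniqE_uniq C : uniq (E C) -> uniq C.
Proof.
elim: C => //= p C IH; rewrite /E /= -/(E _) => /andP [H1 /andP [H2 H3]].
rewrite IH // andbT; apply/negP => Hp; move: H1; rewrite in_cons negb_or => /andP [_].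
by rewrite memE; move/negP; apply; apply/hasP; exists p => //; rewrite eqxx.
Qed.

Lemma cup_unique C x y k : uniq (E C) -> x \in C -> y \in C ->
  (x.1 == k) || (x.2 == k) -> (y.1 == k) || (y.2 == k) -> x = y.
Proof.
elim: C => //= c C IH; rewrite /E /= -/(E _) => /andP [H1 /andP [H2 H3]].
have HcC : forall z, z \in C -> (z.1 == k) || (z.2 == k) -> (c.1 == k) || (c.2 == k) -> False.
  move=> z Hz Hzk /orP [] /eqP Hck.
    by move: H1; rewrite in_cons negb_or memE => /andP [_ /hasP]; apply; exists z; rewrite // Hck.
  by move: H2; rewrite memE => /hasP; apply; exists z; rewrite // Hck.
rewrite !in_cons => /orP [/eqP ->|Hx] /orP [/eqP ->|Hy] Hxk Hyk //.
- by case: (HcC y Hy Hyk Hxk).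
- by case: (HcC x Hx Hxk Hyk).
- by apply: IH.
Qed.

Lemma size_swap lam i j : size (swap_at lam i j) = size lam.
Proof. by rewrite /swap_at size_map size_iota. Qed.

Lemma lab_swap lam i j k : k < size lam ->
  lab (swap_at lam i j) k = if k == i then lab lam j else if k == j then lab lam i else lab lam k.
Proof. by move=> Hk; rewrite /lab /swap_at (nth_map 0) ?size_iota // nth_iota. Qed.

Lemma lab_swap_other lam i j k : k < size lam -> k != i -> k != j ->
  lab (swap_at lam i j) k = lab lam k.
Proof. by move=> Hk Hi Hj; rewrite lab_swap // (negbTE Hi) (negbTE Hj). Qed.

Lemma disj w c p k : c \in cups w -> p \in cups w -> c != p ->
  (c.1 == k) || (c.2 == k) -> (p.1 != k) && (p.2 != k).
Proof.
move=> Hc Hp Hcp Hck; have [U _ _] := cups_inv0 w.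
rewrite -negb_or; apply/negP => H; move/negP: Hcp; apply; apply/eqP.
exact: (@cup_unique _ c p k U Hc Hp Hck H).
Qed.

Lemma in_rays w k : (k \in rays w) = (k < size w) && ~~ on_cup w k.
Proof. by rewrite /rays mem_filter mem_iota andbC. Qed.

Lemma side_ok_self w : side_ok w w.
Proof.
have [U S A] := cups_inv0 w.
apply/andP; split.
  apply/allP => c /A /and4P [_ _ H1 H2]; by rewrite H1 (negbTE H2).
apply/allP => i; rewrite in_rays => /andP [Hi Hni]; apply/allP => j.
rewrite in_rays => /andP [Hj Hnj]; apply/negP => /and3P [Hij Hli Hlj].
by have := @cupsR w i j Hij Hj Hli Hlj; rewrite (negbTE Hni) (negbTE Hnj).
Qed.

Lemma ncw_self w : nclockwise w w = 0.
Proof.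
have [U S A] := cups_inv0 w.
apply/eqP; rewrite -leqn0 leqNgt -has_count; apply/hasP => -[c /A /and4P [_ _ H _]].
by rewrite H.
Qed.

Lemma swap_ok w p : p \in cups w ->
  side_ok w (swap_at w p.1 p.2) && (nclockwise w (swap_at w p.1 p.2) == 1).
Proof.
move=> Hp; have [U S A] := cups_inv0 w.
have /and4P [Hp12 Hp2 Hl1 Hl2] := A p Hp.
have Hp1 : p.1 < size w by apply: ltn_trans Hp2.
have Hne : p.1 != p.2 by rewrite ltn_eqF.
have Hne' : p.2 != p.1 by rewrite eq_sym.
have Lp1 : lab (swap_at w p.1 p.2) p.1 = false by rewrite lab_swap // eqxx (negbTE Hl2).
have Lp2 : lab (swap_at w p.1 p.2) p.2 = true by rewrite lab_swap // eqxx (negbTE Hne') Hl1.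
have Loth : forall c, c \in cups w -> c != p ->
    (lab (swap_at w p.1 p.2) c.1 = lab w c.1) /\ (lab (swap_at w p.1 p.2) c.2 = lab w c.2).
  move=> c Hc Hcp; have /and4P [Hc12 Hc2 _ _] := A c Hc.
  have /andP [D1 D2] := @disj w c p c.1 Hc Hp Hcp (introT orP (or_introl (eqxx c.1))).
  have /andP [D3 D4] := @disj w c p c.2 Hc Hp Hcp (introT orP (or_intror (eqxx c.2))).
  split; rewrite lab_swap_other // 1?eq_sym //; apply: ltn_trans Hc2 => //.
have Hnc : forall c, c \in cups w -> (~~ lab (swap_at w p.1 p.2) c.1) = (c == p).
  move=> c Hc; case: (eqVneq c p) => [->|Hcp]; first by rewrite Lp1.
  have [-> _] := Loth c Hc Hcp; have /and4P [_ _ -> _] := A c Hc; by [].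
apply/andP; split; last first.
  rewrite /nclockwise (eq_in_count Hnc).
  have -> : count (fun c => c == p) (cups w) = count_mem p (cups w).
    by apply: eq_count => c.
  by rewrite count_uniq_mem ?Hp // uniqE_uniq.
apply/andP; split.
  apply/allP => c Hc; case: (eqVneq c p) => [->|Hcp]; first by rewrite Lp1 Lp2.
  have [-> ->] := Loth c Hc Hcp; have /and4P [_ _ -> ->] := A c Hc; by [].
have Hray : forall k, k \in rays w -> lab (swap_at w p.1 p.2) k = lab w k.
  move=> k; rewrite in_rays => /andP [Hk Hnk]; rewrite lab_swap_other //.
    apply/eqP => E1; move: Hnk; rewrite onE E1 memE; apply/negP/negPn/hasP.
    by exists p => //; rewrite eqxx.
  apply/eqP => E1; move: Hnk; rewrite onE E1 memE; apply/negP/negPn/hasP.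
  by exists p => //; rewrite eqxx orbT.
have /andP [_ R] := side_ok_self w.
apply/allP => i Hi; apply/allP => j Hj; rewrite !Hray //.
exact: (allP (allP R i Hi) j Hj).
Qed.

Definition mono (b c : bool) := ~~ (b && ~~ c).

Lemma mono_eq (x y : seq bool) : size x = size y -> count id x = count id y ->
  pairwise mono x -> pairwise mono y -> x = y.
Proof.
elim: x y => [|b x IH] [|c y] //= [Hs] Hc /andP [Ax Px] /andP [Ay Py].
have Hall : forall z : seq bool, all (mono true) z -> count id z = size z.
  move=> z Hz; apply/eqP; rewrite -all_count; apply: sub_all Hz => d; by case: d.
have Hle : forall z : seq bool, count id z <= size z by move=> z; exact: count_size.
case: b c Ax Ay Hc => [] [] Ax Ay Hc.
- by congr cons; apply: IH => //; move: Hc; rewrite !add1n => -[].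
- by move: Hc; rewrite (Hall _ Ax) Hs add1n add0n => Hc; have := Hle y; rewrite -Hc ltnn.
- by move: Hc; rewrite (Hall _ Ay) -Hs add1n add0n => Hc; have := Hle x; rewrite Hc ltnn.
- by congr cons; apply: IH => //; move: Hc; rewrite !add0n.
Qed.

Lemma cnt_iota (a : seq bool) : count id a = count (lab a) (iota 0 (size a)).
Proof. by rewrite -{1}(mkseq_nth false a) /mkseq count_map. Qed.

Lemma cntE (f : nat -> bool) C : all (fun c => f c.1 != f c.2) C -> count f (E C) = size C.
Proof.
elim: C => //= c C IH /andP [H1 H2]; rewrite /E /= -/(E _) IH //.
by move: H1; case: (f c.1); case: (f c.2).
Qed.

Lemma rays_perm w : perm_eq (iota 0 (size w)) (E (cups w) ++ rays w).
Proof.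
have [U S A] := cups_inv0 w.
rewrite -(perm_filterC (fun k => k \in E (cups w)) (iota 0 (size w))).
have -> : rays w = filter (predC (fun k => k \in E (cups w))) (iota 0 (size w)).
  by apply: eq_filter => k /=; rewrite onE.
rewrite perm_cat2r uniq_perm // ?filter_uniq ?iota_uniq //.
move=> k; rewrite mem_filter mem_iota /=; case H: (k \in E (cups w)) => //=.
by rewrite S.
Qed.

Lemma rays_pairwise w (a : seq bool) : side_ok w a ->
  pairwise mono (map (lab a) (rays w)).
Proof.
move=> /andP [_ R]; rewrite pairwise_map.
have P : pairwise ltn (rays w).
  by rewrite -sorted_pairwise; [apply: sorted_filter; [exact: ltn_trans|exact: iota_ltn_sorted]|exact: ltn_trans].
apply: (sub_in_pairwise (P := mem (rays w))) P; last by apply/allP.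
move=> i j Hi Hj /= Hij; have := allP (allP R i Hi) j Hj.
by rewrite Hij.
Qed.

Lemma rays_agree w a : size a = size w -> side_ok w a -> count id a = count id w ->
  forall k, k \in rays w -> lab a k = lab w k.
Proof.
move=> Hs Hok Hc.
have [U S A] := cups_inv0 w.
have Hsplit : forall x : seq bool, all (fun c => lab x c.1 != lab x c.2) (cups w) ->
   count (lab x) (iota 0 (size w)) = size (cups w) + count (lab x) (rays w).
  by move=> x Hx; rewrite ((permP (rays_perm w)) (lab x)) count_cat cntE.
have Hw : all (fun c => lab w c.1 != lab w c.2) (cups w) by case/andP: (side_ok_self w).
have Ha : all (fun c => lab a c.1 != lab a c.2) (cups w) by case/andP: Hok.
move: Hc; rewrite !cnt_iota Hs (Hsplit _ Hw) (Hsplit _ Ha) => /addnI Hc.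
apply/eq_in_map; apply: mono_eq.
- by rewrite !size_map.
- by rewrite !count_map.
- exact: rays_pairwise.
- exact: rays_pairwise (side_ok_self w).
Qed.

Lemma ccw_agree w a d k : side_ok w a -> d \in cups w -> lab a d.1 ->
  (d.1 == k) || (d.2 == k) -> lab a k = lab w k.
Proof.
move=> /andP [Hc _] Hd Ha1 Hdk; have [U S A] := cups_inv0 w.
have /and4P [_ _ Hw1 Hw2] := A d Hd.
have Ha2 : lab a d.2 = false by move: (allP Hc d Hd); rewrite Ha1; case: (lab a d.2).
case/orP: Hdk => /eqP Hk; rewrite -Hk.
  by rewrite Ha1 Hw1.
by rewrite Ha2 (negbTE Hw2).
Qed.

Lemma zero_lem w a : size a = size w -> side_ok w a -> count id a = count id w ->
  nclockwise w a = 0 -> a = w.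
Proof.
move=> Hs Hok Hc H0; apply: (@eq_from_nth _ false) => // k Hk.
rewrite Hs in Hk; change (lab a k = lab w k).
case Hon: (on_cup w k).
  move: Hon => /hasP [d Hd Hdk]; apply: (@ccw_agree w a d k Hok Hd) => //.
  apply/negPn/negP => Hn; move/eqP: H0; apply/negP; rewrite -lt0n -has_count.
  by apply/hasP; exists d.
by apply: rays_agree => //; rewrite in_rays Hk Hon.
Qed.

Lemma one_lem w a : size a = size w -> side_ok w a -> count id a = count id w ->
  nclockwise w a = 1 -> cup_swap w a.
Proof.
move=> Hs Hok Hc H1.
have [U S A] := cups_inv0 w.
have : has (fun p => ~~ lab a p.1) (cups w) by rewrite has_count; move: H1; rewrite /nclockwise => ->.
move=> /hasP [c Hc1 Hcl].
have Hoth : forall d, d \in cups w -> d != c -> lab a d.1.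
  move=> d Hd Hdc; apply/negPn/negP => Hdl.
  have : size [:: d; c] <= size (filter (fun p => ~~ lab a p.1) (cups w)).
    apply: uniq_leq_size; first by rewrite /= in_cons negb_or Hdc.
    by move=> x; rewrite !in_cons in_nil orbF mem_filter => /orP [] /eqP ->; apply/andP.
  by rewrite size_filter; move: H1; rewrite /nclockwise => ->.
apply/hasP; exists c => //; apply/eqP.
have /and4P [Hc12 Hc2 Hw1 Hw2] := A c Hc1.
apply: (@eq_from_nth _ false); first by rewrite size_swap.
move=> k Hk; rewrite Hs in Hk; change (lab a k = lab (swap_at w c.1 c.2) k).
rewrite lab_swap //.
case: (eqVneq k c.1) => [->|Hk1]; first by rewrite (negbTE Hcl) (negbTE Hw2).
case: (eqVneq k c.2) => [->|Hk2].
  have /andP [Hd _] := Hok; have := allP Hd c Hc1.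
  by rewrite (negbTE Hcl) Hw1; case: (lab a c.2).
case Hon: (on_cup w k).
  move: Hon => /hasP [d Hd Hdk]; apply: (@ccw_agree w a d k Hok Hd) => //.
  apply: Hoth => //; apply/eqP => Edc; move: Hdk; rewrite Edc.
  by move=> /orP [] /eqP Ek; [move: Hk1 | move: Hk2]; rewrite Ek eqxx.
by apply: rays_agree => //; rewrite in_rays Hk Hon.
Qed.

Lemma swapP w a : cup_swap w a -> exists2 c, c \in cups w & a = swap_at w c.1 c.2.
Proof. by move=> /hasP [c Hc /eqP ->]; exists c. Qed.

Lemma no_both a b : cup_swap b a -> cup_swap a b -> False.
Proof.
move=> /swapP [c Hc Ea] /swapP [d Hd Eb].
have /and4P [Hc12 Hc2 Hb1 Hb2] := (let: And3 _ _ A := cups_inv0 b in A) c Hc.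
have /and4P [Hd12 Hd2 Ha1 Ha2] := (let: And3 _ _ A := cups_inv0 a in A) d Hd.
have Hsa : size a = size b by rewrite Ea size_swap.
have Hd1 : d.1 < size a by apply: ltn_trans Hd2.
have Ld1 : lab b d.1 = false.
  by rewrite Eb lab_swap // eqxx (negbTE Ha2).
have Ld2 : lab b d.2 = true.
  by rewrite Eb lab_swap // eqxx (gtn_eqF Hd12) Ha1.
move: Ha1 Ha2; rewrite Ea !lab_swap -?Hsa //.
case: (eqVneq d.1 c.1) => [_|H1]; first by rewrite (negbTE Hb2).
case: (eqVneq d.1 c.2) => [E1|H2]; last by rewrite Ld1.
case: (eqVneq d.2 c.1) => [E2|H3].
  by move: Hc12 Hd12; rewrite -E1 -E2 => X Y; have := ltn_trans X Y; rewrite ltnn.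
case: (eqVneq d.2 c.2) => [E3|H4]; first by rewrite Hb1.
by rewrite Ld2.
Qed.

Lemma LambdaP m n (t : (m + n).-tuple bool) : t \in Lambda m n -> count id t = m.
Proof. by rewrite inE => /eqP. Qed.

Lemma swap_iff (w a : seq bool) : size a = size w -> count id a = count id w ->
  cup_swap w a = side_ok w a && (nclockwise w a == 1).
Proof.
move=> Hs Hc; apply/idP/idP.
  by move=> /swapP [c Hc1 ->]; apply: swap_ok.
by move=> /andP [H1 /eqP H2]; apply: one_lem.
Qed.

Theorem lemma2p5 (m n : nat) (hm : 1 <= m) (hn : 1 <= n)
    (alpha beta : (m + n).-tuple bool) :
  alpha \in Lambda m n -> beta \in Lambda m n ->
  n_arrows alpha beta = (if gamma_edge alpha beta then 1 else 0).
Proof.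
move=> Ha Hb.
have Hsab : size alpha = size beta by rewrite !size_tuple.
have Hcab : count id alpha = count id beta by rewrite !LambdaP.
set P1 := side_ok beta alpha && (nclockwise beta alpha == 1).
set P2 := side_ok alpha beta && (nclockwise alpha beta == 1).
have E1 : cup_swap beta alpha = P1 by rewrite swap_iff.
have E2 : cup_swap alpha beta = P2 by rewrite swap_iff.
have Hmem : forall lam, (lam \in [set lam in Lambda m n |
      arc_diagram alpha lam beta && (degree alpha lam beta == 1)]) =
      ((lam == alpha) && P1) || ((lam == beta) && P2).
  move=> lam; rewrite inE; apply/idP/idP.
    move=> /andP [HL /andP [/andP [Hoa Hob] /eqP Hd]].
    have Hsl : size lam = size alpha by rewrite !size_tuple.
    have Hcl : count id lam = count id alpha by rewrite !LambdaP.
    move: Hd; rewrite /degree.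
    case Hx: (nclockwise alpha lam) => [|[|x]] /=.
      move=> Hy; have El : lam = alpha.
        by apply: val_inj; apply: zero_lem.
      by subst lam; rewrite add0n in Hy; rewrite eqxx /= /P1 Hob Hy.
    move=> /eqP; rewrite addSn eqSS => /eqP Hy.
    have El : lam = beta by apply: val_inj; apply: zero_lem => //; rewrite ?Hsl ?Hcl.
    by subst lam; rewrite eqxx /= /P2 Hoa Hx orbT.
    by rewrite !addSn.
  move=> /orP [] /andP [/eqP -> HP].
    move: HP => /andP [H1 /eqP H2].
    by rewrite Ha /arc_diagram side_ok_self H1 /degree ncw_self H2.
  move: HP => /andP [H1 /eqP H2].
  by rewrite Hb /arc_diagram side_ok_self H1 /degree ncw_self H2 addn0.
rewrite /n_arrows /gamma_edge E1 E2.
case HP1: P1; case HP2: P2.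
- by exfalso; apply: (@no_both alpha beta); rewrite ?E1 ?E2.
- rewrite (@eq_card _ _ [set alpha]) ?cards1 // => lam.
  by rewrite Hmem HP1 HP2 in_set1 andbT andbF orbF.
- rewrite (@eq_card _ _ [set beta]) ?cards1 // => lam.
  by rewrite Hmem HP1 HP2 in_set1 andbT andbF.
- rewrite (@eq_card _ _ (set0 : {set (m + n).-tuple bool})) ?cards0 // => lam.
  by rewrite Hmem HP1 HP2 in_set0 !andbF.
Qed.
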